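(* Assume (A). If $c_1\ge c_1^F$, then $\inf_{t>t_0}\sup_{s\in(0,t)}\Upsilon(s,t)=L_{c_2}(t^F_{c_2})$.
   Context: $v:[0,\infty)\to[0,\infty)$ is continuous, $v(0)=0$, $\lim_{t\to\infty}v(t)/t^\alpha=0$ for some $\alpha<2$, and is the variance function of a centered Gaussian process $A$ on $\mathbb R$ with stationary increments, $A(0)=0$: $\mathrm{Var}(A(t)-A(s))=v(|t-s|)$; $\Gamma(s,t):=\tfrac12(v(|s|)+v(|t|)-v(|t-s|))$. Fix $b>0$, $c_1>c_2>0$, $t_0:=b/(c_1-c_2)$. For $0<s<t$, $\Sigma(s,t):=\begin{pmatrix}v(t)&\Gamma(s,t)\\ \Gamma(s,t)&v(s)\end{pmatrix}$ (assumed nonsingular), $\Lambda_{s,t}(y,z):=\frac12(y,z)\Sigma(t-s,t)^{-1}(y,z)^\top$, $k(s,t):=\frac{\Gamma(s,t)}{v(t)}(b+c_2t)$, $\Upsilon(s,t):=\Lambda_{s,t}(b+c_2t,b+c_2t-c_1s)$ if $k(s,t)>c_1s$ and $\Upsilon(s,t):=(b+c_2t)^2/(2v(t))$ otherwise. $L_c(t):=(b+ct)^2/(2v(t))$; $t^F_{c_2}$ denotes a minimizer of $L_{c_2}$ over $t>0$, and $c_1^F:=\sup_{s\in(0,t^F_{c_2})}k(s,t^F_{c_2})/s$. Assumption (A): $\sqrt v\in C^2([0,\infty))$, strictly increasing and strictly concave. *)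

(* Defs.v *)
From Stdlib Require Import Reals Lra.
From Coquelicot Require Import Coquelicot.
Open Scope R_scope.

Definition Gam (v : R -> R) (s t : R) : R :=
  (v (Rabs s) + v (Rabs t) - v (Rabs (t - s))) / 2.

Definition psd_kernel (K : R -> R -> R) : Prop :=
  forall (n : nat) (tt a : nat -> R),
    0 <= sum_f_R0 (fun i => sum_f_R0 (fun j => a i * a j * K (tt i) (tt j)) n) n.

(** v is the variance function of a centered Gaussian process A on R with
    stationary increments and A(0)=0: such a process (necessarily with
    covariance Gam v) exists iff Gam v is a positive semidefinite kernel
    (Kolmogorov extension theorem). *)
Definition variance_function_of_gaussian_SI (v : R -> R) : Prop :=
  psd_kernel (Gam v).

Definition is_derive_nonneg (f : R -> R) (t l : R) : Prop :=
  filterlim (fun h => (f (t + h) - f t) / h)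
    (within (fun h => h <> 0 /\ 0 <= t + h) (locally 0)) (locally l).

Definition continuous_nonneg (f : R -> R) (t : R) : Prop :=
  filterlim f (within (fun x => 0 <= x) (locally t)) (locally (f t)).

Definition C2_nonneg (f : R -> R) : Prop :=
  exists f1 f2 : R -> R,
    (forall t, 0 <= t -> is_derive_nonneg f t (f1 t)) /\
    (forall t, 0 <= t -> is_derive_nonneg f1 t (f2 t)) /\
    (forall t, 0 <= t -> continuous_nonneg f2 t).

Definition strictly_increasing_nonneg (f : R -> R) : Prop :=
  forall x y, 0 <= x -> x < y -> f x < f y.

Definition strictly_concave_nonneg (f : R -> R) : Prop :=
  forall x y l, 0 <= x -> 0 <= y -> x <> y -> 0 < l < 1 ->
    l * f x + (1 - l) * f y < f (l * x + (1 - l) * y).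

Definition assumption_A (v : R -> R) : Prop :=
  C2_nonneg (fun t => sqrt (v t)) /\
  strictly_increasing_nonneg (fun t => sqrt (v t)) /\
  strictly_concave_nonneg (fun t => sqrt (v t)).

(** Sigma(s,t) = [[v t, Gam s t],[Gam s t, v s]]; its determinant. *)
Definition detSigma (v : R -> R) (s t : R) : R :=
  v t * v s - Gam v s t * Gam v s t.

(** Lambda_{s,t}(y,z) = 1/2 (y,z) Sigma(t-s,t)^{-1} (y,z)^T, with the 2x2
    inverse written out: Sigma^{-1} = 1/det [[v(t-s), -G],[-G, v t]],
    G = Gam (t-s) t. *)
Definition Lambda (v : R -> R) (s t y z : R) : R :=
  let G := Gam v (t - s) t in
  (v (t - s) * y * y - 2 * G * y * z + v t * z * z) / (2 * detSigma v (t - s) t).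

Definition kfun (v : R -> R) (b c2 s t : R) : R :=
  Gam v s t / v t * (b + c2 * t).

Definition Upsilon (v : R -> R) (b c1 c2 s t : R) : R :=
  if Rlt_dec (c1 * s) (kfun v b c2 s t)
  then Lambda v s t (b + c2 * t) (b + c2 * t - c1 * s)
  else (b + c2 * t) ^ 2 / (2 * v t).

Definition Lc (v : R -> R) (b c t : R) : R := (b + c * t) ^ 2 / (2 * v t).

Definition c1F (v : R -> R) (b c2 tF : R) : Rbar :=
  Lub_Rbar (fun x => exists s, 0 < s < tF /\ x = kfun v b c2 s tF / s).

Definition supUpsilon (v : R -> R) (b c1 c2 t : R) : Rbar :=
  Lub_Rbar (fun x => exists s, 0 < s < t /\ x = Upsilon v b c1 c2 s t).

(* Main.v *)
Require Import Defs.
From Stdlib Require Import Reals Lra Psatz.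
From Coquelicot Require Import Coquelicot.
Open Scope R_scope.

Lemma deriv_bound (f : R -> R) (l : R) :
  is_derive_nonneg f 0 l -> f 0 = 0 ->
  exists e, 0 < e /\ forall u, 0 < u < e -> f u < (Rabs l + 1) * u.
Proof.
  intros H H0. unfold is_derive_nonneg in H.
  apply filterlim_locally with (eps := mkposreal 1 Rlt_0_1) in H.
  destruct H as [[e he] He]. exists e; split; [exact he|].
  intros u [hu1 hu2].
  assert (Hb : ball 0 e u).
  { change (Rabs (u - 0) < e). rewrite Rminus_0_r, Rabs_pos_eq; lra. }
  specialize (He u Hb). simpl in He.
  assert (Hd : u <> 0 /\ 0 <= 0 + u) by (split; lra).
  specialize (He Hd). change (Rabs ((f (0+u) - f 0)/u - l) < 1) in He.
  rewrite Rplus_0_l, H0, Rminus_0_r in He.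
  apply Rabs_def2 in He. destruct He as [He1 He2].
  assert (f u / u < Rabs l + 1) by (pose proof (Rle_abs l); lra).
  apply (Rmult_lt_compat_r u) in H; [|lra].
  unfold Rdiv in H. rewrite Rmult_assoc, Rinv_l in H; lra.
Qed.

Lemma key_s (v : R -> R) (l t : R)
  (hv_nonneg : forall t, 0 <= t -> 0 <= v t) (hv0 : v 0 = 0)
  (hinc : strictly_increasing_nonneg (fun t => sqrt (v t)))
  (hconc : strictly_concave_nonneg (fun t => sqrt (v t)))
  (hd : is_derive_nonneg (fun t => sqrt (v t)) 0 l) (ht : 0 < t) :
  exists s, 0 < s < t /\ t * (v s + v t - v (t - s)) > 2 * s * v t.
Proof.
  set (f := fun t => sqrt (v t)) in *.
  assert (f0 : f 0 = 0) by (unfold f; rewrite hv0; apply sqrt_0).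
  assert (fsq : forall x, 0 <= x -> v x = f x * f x).
  { intros x hx; unfold f; rewrite sqrt_sqrt; auto. }
  destruct (deriv_bound f l hd f0) as [e [he He]].
  set (M := Rabs l + 1).
  assert (hM : 0 < M) by (unfold M; pose proof (Rabs_pos l); lra).
  set (F := f t). set (H := f (t/2)).
  assert (hF : 0 < F) by (unfold F; rewrite <- f0; apply hinc; lra).
  assert (hH : 0 < H) by (unfold H; rewrite <- f0; apply hinc; lra).
  assert (hHF : F < 2 * H).
  { assert (Hc := hconc 0 t (1/2) (Rle_refl 0) (Rlt_le _ _ ht) ltac:(lra) ltac:(lra)).
    fold f in Hc. rewrite f0 in Hc.
    replace (1/2*0 + (1-1/2)*t) with (t/2) in Hc by field. unfold H, F. lra. }
  set (delta := 2 * F * (2 * H - F)).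
  assert (hdelta : 0 < delta) by (unfold delta; nra).
  set (u := Rmin (t/4) (Rmin (e/2) (delta / (2 * t * M * M)))).
  assert (hu1 : 0 < u).
  { unfold u. repeat apply Rmin_pos; try lra. apply Rdiv_lt_0_compat; [lra|].
    apply Rmult_lt_0_compat; [|lra]. apply Rmult_lt_0_compat; [|lra]. lra. }
  assert (hu2 : u <= t/4) by apply Rmin_l.
  assert (hu3 : u < e) by (unfold u; pose proof (Rmin_r (t/4) (Rmin (e/2) (delta / (2 * t * M * M)))); pose proof (Rmin_l (e/2) (delta / (2 * t * M * M))); lra).
  assert (hu4 : u * (2 * t * M * M) <= delta).
  { assert (u <= delta / (2 * t * M * M)) by (unfold u; pose proof (Rmin_r (t/4) (Rmin (e/2) (delta / (2 * t * M * M)))); pose proof (Rmin_r (e/2) (delta / (2 * t * M * M))); lra).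
    apply (Rmult_le_compat_r (2 * t * M * M)) in H0; [|nra].
    replace (delta / (2 * t * M * M) * (2 * t * M * M)) with delta in H0 by (field; nra). lra. }
  exists (t - u). split; [lra|].
  replace (t - (t - u)) with u by ring.
  assert (Hfu : f u < M * u) by (apply He; lra).
  assert (Hfu0 : 0 <= f u) by (unfold f; apply sqrt_pos).
  assert (Hc := hconc (t/2) t (2*u/t) ltac:(lra) ltac:(lra) ltac:(lra)).
  assert (h2ut : 0 < 2*u/t < 1).
  { split. apply Rdiv_lt_0_compat; lra. apply Rmult_lt_reg_r with t; [lra|].
    unfold Rdiv; rewrite Rmult_assoc, Rinv_l; lra. }
  specialize (Hc h2ut). fold f H F in Hc.
  replace (2*u/t*(t/2) + (1-2*u/t)*t) with (t - u) in Hc by (field; lra).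
  set (g := 2*u/t*H + (1-2*u/t)*F) in Hc.
  assert (hg0 : 0 <= g) by (unfold g; nra).
  assert (Hv1 : g * g <= v (t - u)) by (rewrite fsq by lra; nra).
  assert (Hv2 : v u <= M * M * u * u) by (rewrite fsq by lra; nra).
  rewrite (fsq t) by lra. fold F.
  assert (hgt : g * t = 2*u*H + (t - 2*u)*F) by (unfold g; field; lra).
  assert (Hkey : t * (g*g) * t >= t * (F*F) * t - 2*u*F*F*t + u*delta*t).
  { replace (t * (g*g) * t) with ((g*t)*(g*t)) by ring. rewrite hgt. unfold delta.
    assert (0 <= 4*u*u*((F-H)*(F-H))) by (apply Rmult_le_pos; [nra| apply Rle_0_sqr]). nra. }
  assert (Hkey2 : t * (g*g) >= t * (F*F) - 2*u*F*F + u*delta).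
  { apply Rle_ge. apply Rmult_le_reg_r with t; [lra|]. lra. }
  nra.
Qed.

Lemma Gam_pos v x y : 0 <= x -> 0 <= y -> Gam v x y = (v x + v y - v (Rabs (y - x)))/2.
Proof. intros hx hy; unfold Gam; rewrite (Rabs_pos_eq x hx), (Rabs_pos_eq y hy); reflexivity. Qed.

Lemma det_pos v s t (hv0 : v 0 = 0) (hg : variance_function_of_gaussian_SI v)
  (hvt : 0 < v t) (hst : 0 < s < t) (hD : detSigma v (t - s) t <> 0) :
  0 < detSigma v (t - s) t.
Proof.
  set (G := Gam v (t - s) t).
  specialize (hg 1%nat (fun i => match i with O => t | _ => t - s end)
     (fun i => match i with O => - G | _ => v t end)).
  simpl in hg.
  assert (E1 : Gam v t t = v t).
  { rewrite Gam_pos by lra. replace (t - t) with 0 by ring. rewrite Rabs_R0, hv0; field. }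
  assert (E2 : Gam v t (t - s) = G).
  { unfold G. rewrite !Gam_pos by lra. replace (t - s - t) with (- s) by ring.
    replace (t - (t - s)) with s by ring. rewrite Rabs_Ropp. field. }
  assert (E3 : Gam v (t - s) (t - s) = v (t - s)).
  { rewrite Gam_pos by lra. replace (t - s - (t - s)) with 0 by ring. rewrite Rabs_R0, hv0; field. }
  rewrite E1, E2, E3 in hg. fold G in hg.
  unfold detSigma in hD |- *. fold G in hD |- *.
  assert (0 <= v t * (v t * v (t - s) - G * G)) by nra.
  assert (0 <= v t * v (t - s) - G * G).
  { apply Rmult_le_reg_l with (v t); lra. }
  lra.
Qed.

Lemma Ups_ge v b c1 c2 s t (hv0 : v 0 = 0) (hg : variance_function_of_gaussian_SI v)
  (hvt : 0 < v t) (hst : 0 < s < t) (hD : detSigma v (t - s) t <> 0) :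
  Lc v b c2 t <= Upsilon v b c1 c2 s t.
Proof.
  unfold Upsilon, Lc. destruct (Rlt_dec _ _); [|lra].
  pose proof (det_pos v s t hv0 hg hvt hst hD) as hDp.
  unfold Lambda. set (G := Gam v (t - s) t). fold G in hDp.
  unfold detSigma in hDp |- *. fold G in hDp |- *.
  set (z := b + c2 * t - c1 * s). set (y := b + c2 * t).
  set (D := v t * v (t - s) - G * G) in *.
  assert (E : (v (t - s) * y * y - 2 * G * y * z + v t * z * z) / (2 * D) - y ^ 2 / (2 * v t)
     = (G * y - v t * z) * (G * y - v t * z) / (2 * D * v t)).
  { unfold D in *; field; repeat split; lra. }
  assert (0 <= (G * y - v t * z) * (G * y - v t * z) / (2 * D * v t)).
  { apply Rdiv_le_0_compat; [apply Rle_0_sqr| nra]. }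
  lra.
Qed.

Theorem corollary3p7 (v : R -> R) (b c1 c2 tF : R)
  (hv_cont : forall t, 0 <= t -> continuous_nonneg v t)
  (hv_nonneg : forall t, 0 <= t -> 0 <= v t)
  (hv0 : v 0 = 0)
  (hv_growth : exists alpha, alpha < 2 /\
      is_lim (fun t => v t / Rpower t alpha) p_infty 0)
  (hv_gauss : variance_function_of_gaussian_SI v)
  (hb : 0 < b) (hc2 : 0 < c2) (hc12 : c2 < c1)
  (hSigma : forall s t, 0 < s < t -> detSigma v s t <> 0)
  (htF : 0 < tF) (htFmin : forall t, 0 < t -> Lc v b c2 tF <= Lc v b c2 t)
  (hA : assumption_A v)
  (hc1F : Rbar_le (c1F v b c2 tF) (Finite c1)) :
  Rbar_glb (fun y => exists t, b / (c1 - c2) < t /\ y = supUpsilon v b c1 c2 t)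
  = Finite (Lc v b c2 tF).
Proof.
  destruct hA as [[f1 [f2 [hd1 [hd2 hc]]]] [hinc hconc]].
  assert (vpos : forall t, 0 < t -> 0 < v t).
  { intros t ht. pose proof (hinc 0 t (Rle_refl 0) ht) as H. simpl in H.
    rewrite hv0, sqrt_0 in H.
    destruct (Rle_lt_or_eq_dec 0 (v t) (hv_nonneg t ltac:(lra))) as [h|h]; [exact h|].
    rewrite <- h, sqrt_0 in H; lra. }
  assert (hkle : forall s, 0 < s < tF -> kfun v b c2 s tF <= c1 * s).
  { intros s hs. destruct (Lub_Rbar_correct (fun x => exists s, 0 < s < tF /\ x = kfun v b c2 s tF / s)) as [hub _].
    assert (H := hub (kfun v b c2 s tF / s) (ex_intro _ s (conj hs eq_refl))).
    assert (H2 := Rbar_le_trans _ _ _ H hc1F). simpl in H2.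
    apply (Rmult_le_compat_r s) in H2; [|lra].
    replace (kfun v b c2 s tF / s * s) with (kfun v b c2 s tF) in H2 by (field; lra). lra. }
  assert (ht0pos : 0 < b / (c1 - c2)) by (apply Rdiv_lt_0_compat; lra).
  assert (htF0 : b / (c1 - c2) < tF).
  { destruct (key_s v (f1 0) tF hv_nonneg hv0 hinc hconc (hd1 0 (Rle_refl 0)) htF) as [s [hs Hs]].
    pose proof (hkle s hs) as Hk. unfold kfun in Hk.
    rewrite Gam_pos in Hk by lra. rewrite Rabs_pos_eq in Hk by lra.
    pose proof (vpos tF htF) as hvt.
    set (A := v s + v tF - v (tF - s)) in *.
    assert (EK : A / 2 / v tF * (b + c2 * tF) * (2 * v tF) = A * (b + c2 * tF)) by (field; lra).
    assert (H1 : A * (b + c2 * tF) <= c1 * s * (2 * v tF)).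
    { rewrite <- EK. apply Rmult_le_compat_r; lra. }
    assert (H2 : tF * A * (b + c2 * tF) > 2 * s * v tF * (b + c2 * tF)).
    { apply Rmult_gt_compat_r; nra. }
    assert (H3 : 2 * s * v tF * (b + c2 * tF) < 2 * s * v tF * (c1 * tF)) by nra.
    assert (H4 : b + c2 * tF < c1 * tF).
    { apply Rmult_lt_reg_l with (2 * s * v tF); [nra| lra]. }
    apply Rmult_lt_reg_r with (c1 - c2); [lra|].
    replace (b / (c1 - c2) * (c1 - c2)) with b by (field; lra). lra. }
  apply Rbar_is_glb_unique. split.
  - intros x [t [ht ->]].
    assert (htp : 0 < t) by lra.
    destruct (Lub_Rbar_correct (fun x => exists s, 0 < s < t /\ x = Upsilon v b c1 c2 s t)) as [hub _].
    assert (hs2 : 0 < t/2 < t) by lra.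
    assert (H := hub (Upsilon v b c1 c2 (t/2) t) (ex_intro _ (t/2) (conj hs2 eq_refl))).
    unfold supUpsilon. refine (Rbar_le_trans _ _ _ _ H). simpl.
    pose proof (htFmin t htp).
    pose proof (Ups_ge v b c1 c2 (t/2) t hv0 hv_gauss (vpos t htp) ltac:(lra)
                  (hSigma (t - t/2) t ltac:(lra))). lra.
  - intros bnd Hb. apply Hb. exists tF. split; [exact htF0|].
    symmetry. apply is_lub_Rbar_unique. split.
    + intros x [s [hs ->]]. unfold Upsilon. destruct (Rlt_dec _ _) as [r|r].
      * pose proof (hkle s hs); lra.
      * simpl. unfold Lc. lra.
    + intros b' Hb'. apply Hb'. exists (tF/2). split; [lra|].
      unfold Upsilon. destruct (Rlt_dec _ _) as [r|r].
      * pose proof (hkle (tF/2) ltac:(lra)); lra.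
      * reflexivity.
Qed.
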